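(* Let $G(\circ)$, $G(\ast)$ be groups on a set $G$ of even size $n$. Then there are at most $h+2\varphi(n/2)$ elements $a\in G$ with $\mathrm{dist}_a<3$, where $\varphi$ is Euler's totient function.
   Context: $\mathrm{dist}_a=|\{b\in G: a\circ b\ne a\ast b\}|$, $H=\{a\in G:\mathrm{dist}_a=0\}$ and $h=|H|$. *)

(* Defs.v *)
From mathcomp Require Import all_boot.
Set Implicit Arguments. Unset Strict Implicit. Unset Printing Implicit Defensive.

Definition is_group_law (T : Type) (op : T -> T -> T) : Prop :=
  (forall x y z, op x (op y z) = op (op x y) z) /\
  exists e : T, (forall x, op e x = x /\ op x e = x) /\
                (forall x, exists y, op x y = e /\ op y x = e).

Definition dist (T : finType) (o s : T -> T -> T) (a : T) : nat :=
  #|[set b : T | o a b != s a b]|.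

Definition Hset (T : finType) (o s : T -> T -> T) : {set T} :=
  [set a : T | dist o s a == 0].

(* Main.v *)
Require Import Defs.
From mathcomp Require Import all_boot all_fingroup cyclic zify.
Set Implicit Arguments. Unset Strict Implicit. Unset Printing Implicit Defensive.
Section PermPart.
Variable T : finType.
Local Open Scope group_scope.

Lemma porbit_stable (p : {perm T}) (O : {set T}) z :
  (forall w, w \in O -> p w \in O) -> z \in O -> porbit p z \subset O.
Proof.
move=> st zO; apply/subsetP => w /porbitP [i ->].
elim: i => [|i IH]; first by rewrite expg0 perm1.
by rewrite expgSr permM; apply: st.
Qed.

Lemma porbit_eq (p : {perm T}) x w : w \in porbit p x -> porbit p w = porbit p x.
Proof. by move=> h; apply/eqP; rewrite eq_porbit_mem. Qed.

Lemma porbit_disj (p : {perm T}) x y w :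
  w \in porbit p x -> w \in porbit p y -> x \in porbit p y.
Proof.
move=> h1 h2; rewrite -(porbit_eq h2) (porbit_eq h1); exact: porbit_id.
Qed.

Lemma half_lemma (p q : {perm T}) x y mm k :
  x != y -> p = tperm x y * q -> (forall z, #|porbit p z| = mm) ->
  (forall z, #|porbit q z| = k) ->
  x \in porbit q y -> x \notin porbit p y ->
  k = #|T| /\ mm.*2 = #|T|.
Proof.
move=> nxy pE hp hq xO nxP.
set O := porbit q y.
have yO : y \in O by exact: porbit_id.
have qst : forall w, w \in O -> q w \in O.
  by move=> w wO; rewrite /O -(porbit_eq wO) -[q w]/((q ^+ 1) w) mem_porbit.
have tst : forall w, w \in O -> tperm x y w \in O.
  by move=> w wO; case: tpermP => // ->.
have pst : forall w, w \in O -> p w \in O.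
  by move=> w wO; rewrite pE permM qst ?tst.
have PxO := porbit_stable pst xO.
have PyO := porbit_stable pst yO.
have dis : [disjoint porbit p x & porbit p y].
  apply/pred0P => w /=; apply/negP => /andP [h1 h2].
  by move: nxP; rewrite (porbit_disj h1 h2).
have le2 : mm.*2 <= k.
  rewrite -addnn -{1}(hp x) -(hp y) -(hq y) -cardsUI.
  move: dis; rewrite -setI_eq0 => /eqP ->; rewrite cards0 addn0.
  by apply: subset_leq_card; rewrite subUset PxO PyO.
have mpos : 0 < mm by rewrite -(hp x) lt0n card_porbit_neq0.
have allO : forall z, z \in O.
  move=> z; case: (boolP (z \in O)) => // zO; exfalso.
  have ex : forall i, (p ^+ i) z = (q ^+ i) z.
    elim=> [|i IH]; first by rewrite !expg0.
    rewrite !expgSr !permM IH pE permM tpermD //.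
      apply/negP => /eqP e; move/negP: zO; apply.
      by rewrite /O -(porbit_eq xO) porbit_sym e mem_porbit.
    apply/negP => /eqP e; move/negP: zO; apply.
    by rewrite /O porbit_sym e mem_porbit.
  have : porbit p z = porbit q z.
    apply/setP => w; apply/porbitP/porbitP => [][i ->]; exists i; by rewrite ex.
  move=> e; have : mm = k by rewrite -(hp z) -(hq z) e.
  move=> ek; move: le2; rewrite ek -addnn; lia.
have OT : O = setT by apply/setP=> z; rewrite inE allO.
have kE : k = #|T| by rewrite -(hq y) -/O OT cardsT.
have PQ : porbits q = [set O].
  apply/setP => C; rewrite inE; apply/imsetP/eqP => [[z _ ->]|->].
    by rewrite /O (porbit_eq (allO z)).
  by exists y.
have := porbits_mul_tperm q x y; cbv zeta; rewrite -pE xO PQ cards1 nxy /= addn0 => P2.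
have nPxy : porbit p x != porbit p y.
  by apply/negP => /eqP e; move: nxP; rewrite -e porbit_id.
have sub2 : [set porbit p x; porbit p y] \subset porbits p.
  by rewrite subUset !sub1set !imset_f.
have E2 : [set porbit p x; porbit p y] = porbits p.
  by apply/eqP; rewrite eqEcard sub2 P2 cards2 nPxy.
split => //.
apply/eqP; rewrite eqn_leq -kE le2 /=.
rewrite kE -cardsT -addnn -{1}(hp x) -(hp y).
apply: leq_trans (leq_card_setU _ _).
apply: subset_leq_card; apply/subsetP => z _.
have : porbit p z \in porbits p by rewrite imset_f.
rewrite -E2 !inE => /orP [] /eqP <-; rewrite porbit_id //.
by rewrite orbT.
Qed.

Lemma perm_tperm_orbits (p q : {perm T}) x y mm k :
  x != y -> p = tperm x y * q -> (forall z, #|porbit p z| = mm) ->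
  (forall z, #|porbit q z| = k) ->
  (k = #|T| /\ mm.*2 = #|T|) \/ (mm = #|T| /\ k.*2 = #|T|).
Proof.
move=> nxy pE hp hq.
have qE : q = tperm x y * p by rewrite pE tpermKg.
have h1 := porbits_mul_tperm q x y; cbv zeta in h1; rewrite -pE nxy in h1.
have h2 := porbits_mul_tperm p x y; cbv zeta in h2; rewrite -qE nxy in h2.
case: (boolP (x \in porbit q y)) => xq; case: (boolP (x \in porbit p y)) => xp.
- move: h1 h2; rewrite xq xp /=; lia.
- by left; apply: (half_lemma nxy pE hp hq).
- by right; apply: (half_lemma nxy qE hq hp).
- move: h1 h2; rewrite xq xp /=; lia.
Qed.

End PermPart.
Lemma divdiv n d : 0 < n -> d %| n -> n %/ (n %/ d) = d.
Proof.
move=> n0 dn; have d0 : 0 < d by case: d dn => //; rewrite dvd0n => /eqP E; rewrite E in n0.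
rewrite -{1}(divnK dn) mulKn // divn_gt0 // dvdn_leq //.
Qed.

Section GL.
Variables (T : finType) (op : T -> T -> T).
Hypothesis Hop : is_group_law op.
Local Open Scope group_scope.

Lemma op_inj a : injective (op a).
Proof.
case: Hop => A [e [he hi]] x y E.
case: (hi a) => a' [_ h2].
by rewrite -(proj1 (he x)) -(proj1 (he y)) -h2 -!A E.
Qed.

Lemma op_injr z : injective (fun c => op c z).
Proof.
case: Hop => A [e [he hi]] x y /= E.
case: (hi z) => z' [h1 _].
by rewrite -(proj2 (he x)) -(proj2 (he y)) -h1 !A E.
Qed.

Definition Lp a : {perm T} := perm (@op_inj a).

Lemma LpE a x : Lp a x = op a x.
Proof. by rewrite permE. Qed.

Lemma LpM a b : Lp a * Lp b = Lp (op b a).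
Proof.
apply/permP => x; rewrite permM !LpE.
by case: Hop => A _; rewrite A.
Qed.

Lemma Lp_inj : injective Lp.
Proof.
move=> a b E; case: Hop => A [e [he hi]].
by rewrite -(proj2 (he a)) -(proj2 (he b)) -!LpE E.
Qed.

Definition Gp := [set Lp a | a : T].

Lemma Gp_group : group_set Gp.
Proof.
apply/group_setP; split.
  case: Hop => A [e [he hi]]; apply/imsetP; exists e => //.
  by apply/permP => x; rewrite LpE perm1 (proj1 (he x)).
move=> _ _ /imsetP [a _ ->] /imsetP [b _ ->]; rewrite LpM; exact: imset_f.
Qed.

Canonical Gg := group Gp_group.

Lemma card_Gp : #|Gp| = #|T|.
Proof. by rewrite card_imset //; exact: Lp_inj. Qed.

Definition ord a := #[Lp a].

Lemma orbit_size a z : #|porbit (Lp a) z| = ord a.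
Proof.
rewrite porbit.unlock /ord /order card_in_imset //.
have sub : <[Lp a]> \subset Gg by rewrite cycle_subG; exact: imset_f.
move=> f g fG gG; have := subsetP sub _ fG; have := subsetP sub _ gG.
move=> /imsetP [c _ ->] /imsetP [c' _ ->]; rewrite /aperm !LpE => E.
by rewrite (op_injr E).
Qed.

Lemma count_ord d : (exists g, ord g = #|T|) -> d %| #|T| ->
  #|[set a | ord a == d]| <= totient d.
Proof.
case=> g og dn.
have n0 : 0 < #|T| by apply/card_gt0P; exists g.
have gG : Lp g \in Gg by exact: imset_f.
have cyc : cyclic Gg.
  apply/cyclicP; exists (Lp g); apply/eqP; rewrite eq_sym eqEcard cycle_subG gG /=.
  by rewrite card_Gp -og.
set y := Lp g ^+ (#|T| %/ d).
have yG : y \in Gg by rewrite groupX.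
have oy : #[y] = d.
  rewrite orderXdiv; last by move: og; rewrite /ord => ->; exact: dvdn_div.
  by move: og; rewrite /ord => ->; rewrite divdiv.
rewrite -(card_imset _ Lp_inj) -oy totient_gen.
apply: subset_leq_card; apply/subsetP => x /imsetP [a]; rewrite inE => /eqP oa ->.
rewrite inE /generator.
have s1 : <[y]> \subset Gg by rewrite cycle_subG.
have s2 : <[Lp a]> \subset Gg by rewrite cycle_subG imset_f.
by rewrite (eq_subG_cyclic cyc s1 s2) -[#|<[y]>|]/#[y] -[#|<[Lp a]>|]/(ord a) oa.
Qed.

Lemma count_ord_n : #|[set a | ord a == #|T|]| <= totient #|T|.
Proof.
case: (set_0Vmem [set a | ord a == #|T|]) => [->|[g]]; first by rewrite cards0.
by rewrite inE => /eqP og; apply: count_ord => //; exists g.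
Qed.

End GL.
Lemma totient_double m : totient (2 * m) <= 2 * totient m.
Proof.
have -> : 2 * m = m + m by lia.
rewrite !totient_count_coprime (big_cat_nat _ (n:=m)) ?leq_addr //=.
rewrite mul2n -addnn leq_add //.
  apply: leq_sum => i _; case: (boolP (coprime (m+m) i)) => // h.
  by rewrite (coprime_dvdl _ h) // dvdn_addr.
rewrite (big_addn 0 (m+m) m) addnK.
apply: leq_sum => i _; case: (boolP (coprime (m+m) (i+m))) => // h.
have : coprime m (i + m) by rewrite (coprime_dvdl _ h) // dvdn_addr.
by rewrite /coprime gcdnDr => ->.
Qed.

Section Two.
Variables (T : finType) (o s : T -> T -> T).
Hypotheses (Ho : is_group_law o) (Hs : is_group_law s).
Local Open Scope group_scope.

Lemma diff_partner a b : o a b != s a b ->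
  exists w, [/\ o a w != s a w, w != b & s a w = o a b].
Proof.
move=> H.
set w := (Lp Hs a)^-1 (o a b).
have sw : s a w = o a b by rewrite -(LpE Hs) permKV.
exists w; split => //.
- apply/negP => /eqP e.
  have wb : w = b by apply: (@op_inj _ _ Ho a); rewrite e sw.
  by move: H; rewrite wb in sw; rewrite sw eqxx.
- apply/negP => /eqP wb.
  by move: H; rewrite wb in sw; rewrite sw eqxx.
Qed.

Lemma dist_neq1 a : dist o s a != 1%N.
Proof.
apply/negP => /cards1P [b E].
have bD : b \in [set b0 | o a b0 != s a b0] by rewrite E set11.
move: bD; rewrite inE => /diff_partner [w [hw nwb _]].
have : w \in [set b0 | o a b0 != s a b0] by rewrite inE.
by rewrite E inE (negbTE nwb).
Qed.

Lemma dist2_tperm a : dist o s a = 2%N ->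
  exists x y, x != y /\ Lp Ho a = tperm x y * Lp Hs a.
Proof.
move/eqP/cards2P => [x [y [nxy E]]].
exists x, y; split => //.
have memD z : (o a z != s a z) = (z \in [set x; y]) by rewrite -E inE.
apply/permP => z; rewrite permM !LpE.
case: tpermP => [->|->|zx zy].
- have : o a x != s a x by rewrite memD !inE eqxx.
  move=> /diff_partner [w [hw nwx sw]].
  move: hw; rewrite memD !inE (negbTE nwx) /= => /eqP wy.
  by rewrite -sw wy.
- have : o a y != s a y by rewrite memD !inE eqxx orbT.
  move=> /diff_partner [w [hw nwy sw]].
  move: hw; rewrite memD !inE (negbTE nwy) orbF => /eqP wx.
  by rewrite -sw wx.
- apply/eqP; apply/negPn; rewrite memD !inE.
  by apply/negP => /orP [] /eqP e; [apply: zx | apply: zy].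
Qed.

Lemma dist2_ord a : dist o s a = 2%N ->
  (ord Hs a = #|T| /\ (ord Ho a).*2 = #|T|) \/
  (ord Ho a = #|T| /\ (ord Hs a).*2 = #|T|).
Proof.
move=> /dist2_tperm [x [y [nxy E]]].
apply: (perm_tperm_orbits nxy E) => z; exact: orbit_size.
Qed.

End Two.

Theorem lemma4p15 (T : finType) (o s : T -> T -> T) :
  is_group_law o -> is_group_law s -> ~~ odd #|T| ->
  #|[set a : T | dist o s a < 3]| <= #|Hset o s| + 2 * totient (#|T| %/ 2).
Proof.
move=> Ho Hs ev.
set n := #|T|; set m := n %/ 2.
have nE : n = m.*2 by rewrite /m divn2 -{1}(odd_double_half n) (negbTE ev).
have mn : m %| n by rewrite nE -mul2n dvdn_mull.
set D1 := [set a | (ord Ho a == n) && (ord Hs a == m)].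
set D2 := [set a | (ord Hs a == n) && (ord Ho a == m)].
have sub : [set a : T | dist o s a < 3] \subset Hset o s :|: (D1 :|: D2).
  apply/subsetP => a; rewrite inE => lt3.
  have n1 := @dist_neq1 T o s Ho Hs a.
  have h := @dist2_ord T o s Ho Hs a.
  case E : (dist o s a) lt3 n1 h => [|[|[|k]]] //= _ _ h.
    by apply/setUP; left; rewrite /Hset inE E.
  case: (h erefl) => [][h1 h2]; apply/setUP; right; apply/setUP.
    by right; rewrite !inE h1 eqxx /=; apply/eqP; move: h2; rewrite -/n nE => /double_inj.
  by left; rewrite !inE h1 eqxx /=; apply/eqP; move: h2; rewrite -/n nE => /double_inj.
apply: leq_trans (subset_leq_card sub) _.
apply: leq_trans (leq_card_setU _ _) _; rewrite leq_add2l.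
apply: leq_trans (leq_card_setU _ _) _.
have tn : totient n <= 2 * totient m by rewrite nE -mul2n totient_double.
case: (set_0Vmem D1) => [->|[a1 a1D]].
  rewrite cards0 add0n; apply: leq_trans tn.
  apply: leq_trans (count_ord_n Hs); apply: subset_leq_card.
  by apply/subsetP => a; rewrite !inE => /andP [].
case: (set_0Vmem D2) => [->|[a2 a2D]].
  rewrite cards0 addn0; apply: leq_trans tn.
  apply: leq_trans (count_ord_n Ho); apply: subset_leq_card.
  by apply/subsetP => a; rewrite !inE => /andP [].
move: a1D a2D; rewrite !inE => /andP [/eqP o1 _] /andP [/eqP o2 _].
rewrite mul2n -addnn leq_add //.
  apply: leq_trans (count_ord (Hop:=Hs) _ mn); last by exists a2.
  by apply: subset_leq_card; apply/subsetP => a; rewrite !inE => /andP [].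
apply: leq_trans (count_ord (Hop:=Ho) _ mn); last by exists a1.
by apply: subset_leq_card; apply/subsetP => a; rewrite !inE => /andP [].
Qed.
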